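(* For every integer $n>2$ there exist an integer $N\ge n$ and a probability vector $p=(p_1,\dots,p_N)$ with all $p_k>0$ such that $D(p)<0$.
   Context: For $N\ge2$ and a probability vector $p=(p_1,\dots,p_N)$ with all $p_k>0$, $$D(p)=2\log N+\frac1N\sum_{k=1}^N(\log p_k)^2-\frac1{N^2}\Big(\sum_{k=1}^N\log p_k\Big)^2+\frac2N\sum_{k=1}^N\log p_k,$$ which equals $\lim_{\alpha\to0+}\frac{\partial^2}{\partial\alpha^2}\mathcal H_\alpha(p)$ for the Rényi entropy $\mathcal H_\alpha(p)=\frac1{1-\alpha}\log\sum_k p_k^\alpha$. Logarithms are natural. *)

(* Defs.v *)
From mathcomp Require Import all_boot all_order all_algebra.
From mathcomp Require Import all_classical all_reals all_analysis.
Set Implicit Arguments. Unset Strict Implicit. Unset Printing Implicit Defensive.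
Import Order.TTheory GRing.Theory Num.Theory.
Local Open Scope ring_scope.

Definition renyiD (R : realType) (N : nat) (p : 'I_N -> R) : R :=
  2 * ln (N%:R) + (N%:R)^-1 * (\sum_(k < N) (ln (p k)) ^+ 2)
  - (N%:R ^+ 2)^-1 * (\sum_(k < N) ln (p k)) ^+ 2
  + 2 / N%:R * (\sum_(k < N) ln (p k)).

Definition is_pos_prob (R : realType) (N : nat) (p : 'I_N -> R) : Prop :=
  (forall k, 0 < p k) /\ \sum_(k < N) p k = 1.

(* Main.v *)
Require Import Defs.
From mathcomp Require Import all_boot all_order all_algebra.
From mathcomp Require Import all_classical all_reals all_analysis.
From mathcomp Require Import zify ring lra.
Import Order.TTheory GRing.Theory Num.Theory.
Local Open Scope ring_scope.

Lemma natb k : (2 + 2 * (k+6) + (k+6) ^ 2 < 2 ^ (k+6))%N.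
Proof.
elim: k => [|k IH]; first by [].
rewrite (_ : (k.+1 + 6 = (k+6).+1)%N) // expnS.
rewrite expn1 (expnS 2).
rewrite -mulnn in IH.
move: IH; move: (2 ^ (k+6))%N => P.
have : (6 <= k + 6)%N by lia.
move: (k+6)%N => m hm IH.
have : (m <= m * m)%N by nia. nia.
Qed.

Lemma alg (R : realType) (c K M L : R) : 1/2 <= c -> c <= 1 -> 0 <= K ->
  2 + 2*K + K^+2 < M -> L <= K*c + M^-1 ->
  forall N A B, N = M + 1 -> A = - c -> B = -(c + K*c) ->
  2 * L + N^-1 * (A^+2 + M * B^+2) - (N^+2)^-1 * (A + M*B)^+2 + 2 / N * (A + M*B) < 0.
Proof.
move=> c1 c2 K0 hM hL N A B hN hA hB.
have M0 : 0 < M by nra.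
have N0 : 0 < N by rewrite hN; lra.
have -> : 2 * L + N^-1 * (A^+2 + M * B^+2) - (N^+2)^-1 * (A + M*B)^+2 + 2 / N * (A + M*B)
   = 2 * L + (-2*c - 2*K*c + 2*K*c/N + (K*c)^+2 * M / N^+2).
  rewrite hA hB hN; field; lra.
have h1 : 2 * L <= 2 * K * c + 2 / M.
  rewrite -[2 / M]/(2 * M^-1); lra.
have h2 : 2*K*c/N <= 2*K/M.
  rewrite ler_pdivlMr // mulrAC ler_pdivrMr //; rewrite hN. have : c*M <= M+1 by nra. nra.
have h3 : (K*c)^+2 * M / N^+2 <= K^+2 / M.
  rewrite ler_pdivrMr ?exprn_gt0 // (mulrAC (K^+2)) ler_pdivlMr //.
  rewrite hN. have hc : c^+2 <= 1 by nra. have hm : M*M <= (M+1)^+2 by nra.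
  have hK : 0 <= K^+2 by nra.
  rewrite (_ : (K*c)^+2 * M * M = K^+2 * (c^+2 * (M*M))); last by ring.
  apply: ler_wpM2l => //. nra.
have h4 : (2 + 2*K + K^+2) / M < 1 by rewrite ltr_pdivrMr // mul1r.
have : 2 / M + 2*K/M + K^+2/M < 2 * c.
  rewrite -!mulrDl; lra.
lra.
Qed.

Lemma sum_split (R : realType) (M : nat) (a b : R) (f : R -> R) :
  \sum_(k < M.+1) f (if k == ord0 then a else b) = f a + M%:R * f b.
Proof.
rewrite big_ord_recl eqxx /=.
by rewrite sumr_const card_ord mulr_natl.
Qed.

Theorem mainTheorem4 (R : realType) (n : nat) (hn : (2 < n)%N) :
  exists (N : nat) (p : 'I_N -> R),
    (n <= N)%N /\ is_pos_prob p /\ renyiD p < 0.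
Proof.
pose m := (n + 6)%N.
pose M := (2 ^ m)%N.
pose b : R := (2 * M%:R)^-1.
have M0 : (0 : R) < M%:R by rewrite ltr0n /M expn_gt0.
have b0 : 0 < b by rewrite /b invr_gt0 mulr_gt0.
exists M.+1, (fun k => if k == ord0 then 1/2 else b).
split; first by have := ltn_expl m (isT : (1 < 2)%N); rewrite /M /m; lia.
split.
  split; first by move=> k; case: ifP.
  rewrite (@sum_split R _ _ _ (fun x => x)) /b invfM mulrCA divff ?mulr1; last by rewrite gt_eqF.
  by field.
rewrite /renyiD (@sum_split R _ _ _ (fun x => ln x ^+ 2)) (@sum_split R _ _ _ (fun x => ln x)).
set c := ln (2 : R).
have ln2 : ln (1/2 : R) = - c by rewrite mul1r lnV // posrE.
have hc1 : c <= 1 by have := @le_ln1Dx R 1; rewrite /c; apply; lra.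
have hc2 : 1/2 <= c.
  have := @le_ln1Dx R (- (1/2)); rewrite (_ : 1 + - (1/2) = 1/2 :> R); last by field.
  rewrite ln2; move=> h; have := h ltac:(lra); lra.
have hMe : (M%:R : R) = 2 ^+ m by rewrite /M natrX.
have lnMM : ln (M%:R : R) = m%:R * c by rewrite hMe lnXn // mulr_natl.
have lnb : ln b = -(c + m%:R * c).
  by rewrite /b lnV ?posrE ?mulr_gt0 // lnM ?posrE // lnMM.
have hL : ln ((M.+1)%:R : R) <= m%:R * c + (M%:R)^-1.
  rewrite -natr1 (_ : M%:R + 1 = M%:R * (1 + (M%:R)^-1)); last by field; rewrite gt_eqF.
  rewrite lnM ?posrE // ?lnMM.
  rewrite lerD2l le_ln1Dx //; apply: lt_le_trans (_ : 0 <= _); [lra | by rewrite invr_ge0 ltW].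
have hM : 2 + 2 * m%:R + (m%:R)^+2 < (M%:R : R).
  have := natb n; rewrite -/m -/M -(ltr_nat R) natrD natrM natrX /=.
  by rewrite natrD natrM expr2.
have K0 : (0:R) <= m%:R by rewrite ler0n.
have := @alg R _ _ _ _ hc2 hc1 K0 hM hL _ _ _ (esym (natr1 _)) ln2 lnb.
move=> H; exact H.
Qed.
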